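(* Let $\beta$ be an element of $\mathbb{K}$ (e.g. an indeterminate adjoined to $\mathbb{K}$). Let $G_{\mathrm{cyc}}$ be the $q$-grammar with master variables $S=\{x,y,z,e\}$, rule \[ x_j\mapsto q^jy_jx_{j+1},\quad y_j\mapsto q^jy_jx_{j+1},\quad z_j\mapsto q^jy_jx_{j+1},\quad e_j\mapsto \beta q^je_jz_{j+1}\qquad(j\ge0), \] and order KSO (identity), and let $D$ be its $q$-derivative. Let $\phi$ be the evaluation with $\phi(x_j)=x$, $\phi(y_j)=y$, $\phi(z_j)=z$, $\phi(e_j)=e$ for all $j$ (commuting indeterminates). Then for all $n\ge1$, \[ \phi\big(D^n(e_0)\big)=e\,F^{\mathrm{inv}}_n(q;x,y,z\mid\beta),\qquad F^{\mathrm{inv}}_n(q;x,y,z\mid\beta)=\sum_{\sigma\in\mathfrak{S}_n}q^{\operatorname{inv}(\sigma)}x^{\operatorname{iasc}(\sigma)}z^{\operatorname{isol}(\sigma)}y^{\operatorname{des}(\sigma)-1}\beta^{\operatorname{RLmin}(\sigma)}. \]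
   Context: $\mathbb{K}$ is a commutative ring with unity and characteristic zero, $q$ an indeterminate. For a set $S$ of master variables, $\mathbb{S}=\{s_i:s\in S,\ i\ge0\}$ is a set of non-commuting variables, $F(\mathbb{S})$ the free group on $\mathbb{S}$, $\mathbb{E}=\mathbb{K}[q][F(\mathbb{S})]$ its group algebra. A rule $R$ assigns to each $s_i$ an element of $\mathbb{E}$, extended by $R(s_i^{-1})=-s_i^{-1}R(s_i)s_{i+1}^{-1}$. The up-arrow $\uparrow$ is the linear map replacing each letter $s_i^{\pm1}$ by $s_{i+1}^{\pm1}$. The $q$-derivative of a $q$-grammar $(S,R,\rho)$ (with $\rho$ an order, i.e. a letter-permuting rewriting of words; KSO is the identity) is the $\mathbb{K}[q]$-linear map with $D(w_1\cdots w_n)=\sum_{j=1}^n\rho\big(w_1\cdots w_{j-1}R(w_j)\uparrow(w_{j+1}\cdots w_n)\big)$ for letters $w_j$, $D^0=\mathrm{id}$, $D^k=D\circ D^{k-1}$. An evaluation extends to a $\mathbb{K}[q]$-linear ring morphism. For $\sigma\in\mathfrak{S}_n$ with convention $\sigma_0=\sigma_{n+1}=0$: $0\le i\le n$ is a descent if $\sigma_i>\sigma_{i+1}$, an ascent otherwise, $\operatorname{des}$ counts descents; $\operatorname{inv}(\sigma)=\#\{(i,j):i<j,\ \sigma_i>\sigma_j\}$; a right-to-left minimum is an entry $\sigma_i$ with $\sigma_i<\sigma_j$ for all $j>i$, $\operatorname{RLmin}$ counts them; placing a bar at the start and after each right-to-left minimum, an entry alone between two consecutive bars is isolated, $\operatorname{isol}$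 counts isolated entries; an index $0\le i\le n-1$ is a non-isolated ascent if it is an ascent and $\sigma_{i+1}$ is not isolated, $\operatorname{iasc}$ counts them. *)

(* Defs.v *)
From HB Require Import structures.
From mathcomp Require Import all_boot all_order all_algebra all_fingroup.
From mathcomp Require Import mpoly.
Set Implicit Arguments. Unset Strict Implicit. Unset Printing Implicit Defensive.
Import GRing.Theory.
Local Open Scope ring_scope.

Inductive master := MX | MY | MZ | ME.

Definition letter := (master * nat)%type.
Definition word := seq letter.

Section Grammar.
Variable K : comNzRingType.

(* An element of E = K[q][F(S)] represented as a formal sum
   sum_k c_k w_k (a list of (coefficient, word) pairs). *)
Definition elem := seq ({poly K} * word).

Definition up (w : word) : word := [seq (l.1, l.2.+1) | l <- w].

Definition rule_cyc (beta : K) (l : letter) : elem :=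
  let j := l.2 in
  match l.1 with
  | ME => [:: (beta%:P * 'X^j, [:: (ME, j); (MZ, j.+1)])]
  | _  => [:: ('X^j, [:: (MY, j); (MX, j.+1)])]
  end.

(* q-derivative on a word (order KSO = identity):
   D(w_1...w_n) = sum_j w_1..w_{j-1} R(w_j) up(w_{j+1}..w_n) *)
Definition Dword (beta : K) (w : word) : elem :=
  flatten [seq [seq (c.1, take j w ++ c.2 ++ up (drop j.+1 w))
               | c <- rule_cyc beta (nth (MX, 0%N) w j)]
          | j <- iota 0 (size w)].

Definition Dcyc (beta : K) (E : elem) : elem :=
  flatten [seq [seq (a.1 * c.1, c.2) | c <- Dword beta a.2] | a <- E].

Definition Dcyc_iter (beta : K) (n : nat) (E : elem) : elem :=
  iter n (Dcyc beta) E.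

(* indeterminates of K[q][x,y,z,e] = {mpoly {poly K}[4]}:
   x = 'X_0, y = 'X_1, z = 'X_2, e = 'X_3 *)
Definition midx (s : master) : 'I_4 :=
  match s with MX => inord 0 | MY => inord 1 | MZ => inord 2 | ME => inord 3 end.

Definition phi (E : elem) : {mpoly {poly K}[4]} :=
  \sum_(a <- E) a.1 *: \prod_(l <- a.2) 'X_(midx l.1).

Definition e0 : elem := [:: (1, [:: (ME, 0%N)])].
End Grammar.

Section Stats.
Variable n : nat.
Implicit Type s : 'S_n.

(* sigma_i for 1 <= i <= n (values in 1..n), with sigma_0 = sigma_{n+1} = 0 *)
Definition sv s (i : nat) : nat := nth 0%N (0%N :: [seq (s k).+1 | k <- enum 'I_n]) i.

Definition is_descent s (i : nat) : bool := (sv s i.+1 < sv s i)%N.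
Definition is_ascent s (i : nat) : bool := ~~ is_descent s i.

Definition des s : nat := count (is_descent s) (iota 0 n.+1).

Definition inv s : nat :=
  count (fun ij : nat * nat => (ij.1 < ij.2)%N && (sv s ij.2 < sv s ij.1)%N)
        [seq (i, j) | i <- iota 1 n, j <- iota 1 n].

Definition is_rlmin s (i : nat) : bool :=
  all (fun j => (sv s i < sv s j)%N) (iota i.+1 (n - i)).

Definition RLmin s : nat := count (is_rlmin s) (iota 1 n).

(* bars at the start and after each RL-minimum; sigma_i is isolated iff
   a bar is right before it and right after it *)
Definition is_isolated s (i : nat) : bool :=
  ((i == 1%N) || is_rlmin s i.-1) && is_rlmin s i.

Definition isol s : nat := count (is_isolated s) (iota 1 n).

Definition iasc s : nat :=
  count (fun i => is_ascent s i && ~~ is_isolated s i.+1) (iota 0 n).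
End Stats.

Local Open Scope ring_scope.
Definition Finv (K : comNzRingType) (beta : K) (n : nat) : {mpoly {poly K}[4]} :=
  \sum_(s : 'S_n)
     ((beta ^+ RLmin s)%:P * 'X^(inv s)) *:
       ('X_(midx MX) ^+ iasc s * 'X_(midx MZ) ^+ isol s
        * 'X_(midx MY) ^+ (des s).-1).

(* Main.v *)
Require Import Defs.
From mathcomp Require Import all_boot all_order all_algebra all_fingroup.
From mathcomp Require Import mpoly.
From mathcomp Require Import zify ring.
Set Implicit Arguments. Unset Strict Implicit. Unset Printing Implicit Defensive.

Definition svL (l : seq nat) i := nth 0 (0 :: l) i.
Definition rlL (l : seq nat) i := all (fun j => svL l i < svL l j) (iota i.+1 (size l - i)).
Definition isoL l i := ((i == 1) || rlL l i.-1) && rlL l i.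
Definition typL l j := if svL l j.+1 < svL l j then MY else if isoL l j.+1 then MZ else MX.
Definition wl l i : letter := if i is 0 then (ME, 0) else (typL l (size l - i), i).
Definition wordL l : word := map (wl l) (iota 0 (size l).+1).
Definition ins n (l : seq nat) p := take (n - p) l ++ n.+1 :: drop (n - p) l.

Lemma rlL_drop l i : rlL l i = all (fun v => svL l i < v) (drop i l).
Proof.
rewrite /rlL.
have -> : iota i.+1 (size l - i) = map (addn 1) (iota i (size l - i)) by rewrite -iotaDl.
rewrite all_map.
have -> : all (preim (addn 1) (fun j => svL l i < svL l j)) (iota i (size l - i)) =
   all (fun v => svL l i < v) [seq nth 0 l j | j <- iota i (size l - i)].
  by rewrite all_map; apply: eq_all => j.
rewrite (map_nth_iota 0) //.
by rewrite take_oversize // size_drop.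
Qed.

Section Ins.
Variables (n : nat) (l : seq nat) (p : nat).
Hypothesis Hs : size l = n.
Hypothesis Hv : all (fun v => 0 < v <= n) l.
Hypothesis Hp : p <= n.
Let k := n - p.
Let l' := ins n l p.

Lemma svL_le i : svL l i <= n.
Proof.
rewrite /svL; case: i => //= i.
case: (ltnP i (size l)) => hi; last by rewrite nth_default.
have /(all_nthP 0) H := Hv.
by case/andP: (H i hi).
Qed.

Lemma svL_pos i : 1 <= i <= n -> 0 < svL l i.
Proof.
case: i => // i /andP[_ hi].
have /(all_nthP 0) H := Hv.
have hi' : i < size l by rewrite Hs.
by case/andP: (H i hi').
Qed.

Lemma size_take_k : size (take k l) = k.
Proof. by rewrite size_take Hs; case: ltnP => //; rewrite /k; lia. Qed.

Lemma svL_ins_lo i : i <= k -> svL l' i = svL l i.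
Proof.
case: i => // i hi; rewrite /svL /= /l' /ins -/k nth_cat size_take_k hi nth_take //.
Qed.

Lemma svL_ins_mid : svL l' k.+1 = n.+1.
Proof. by rewrite /svL /= /l' /ins -/k nth_cat size_take_k ltnn subnn. Qed.

Lemma svL_ins_hi i : k.+1 < i -> svL l' i = svL l i.-1.
Proof.
case: i => // i hi; rewrite /svL /= /l' /ins -/k nth_cat size_take_k.
rewrite ltnNge ltnW //=.
case: i hi => // i hi /=.
have -> : i.+1 - k = (i - k).+1 by lia.
by rewrite /= nth_drop; congr nth; lia.
Qed.

Lemma rlL_ins_lo i : i <= k -> rlL l' i = rlL l i.
Proof.
move=> hi; rewrite !rlL_drop svL_ins_lo // /l' /ins -/k.
rewrite drop_cat size_take_k.
case: (ltnP i k) => hik.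
  rewrite all_cat /=.
  have -> : drop i l = drop i (take k l) ++ drop k l.
    by rewrite -{1}(cat_take_drop k l) drop_cat size_take_k hik.
  by rewrite all_cat (leq_ltn_trans (svL_le i)).
have -> : i = k by apply/eqP; rewrite eqn_leq hi hik.
rewrite subnn /= (leq_ltn_trans (svL_le k)) //.
Qed.

Lemma rlL_ins_hi i : k.+1 < i -> rlL l' i = rlL l i.-1.
Proof.
move=> hi; rewrite !rlL_drop svL_ins_hi // /l' /ins -/k.
rewrite drop_cat size_take_k ltnNge (ltnW (ltnW hi)) /=.
have -> : i - k = (i - k).-1.+1 by lia.
by rewrite /= drop_drop; congr (all _ (drop _ _)); lia.
Qed.

Lemma rlL_ins_mid : k < n -> rlL l' k.+1 = false.
Proof.
move=> hk; rewrite rlL_drop svL_ins_mid /l' /ins -/k drop_cat size_take_k ltnNge leqnSn /=.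
have -> : k.+1 - k = 1 by lia.
rewrite /= drop0.
rewrite (drop_nth 0); last by rewrite Hs.
rewrite /= ltnNge.
have := svL_le k.+1; rewrite /svL /= => H. by rewrite (leq_trans H).
Qed.

Lemma typL_lo j : j < k -> typL l' j = typL l j.
Proof.
move=> hj; rewrite /typL /isoL !svL_ins_lo //; try lia.
rewrite !rlL_ins_lo //; lia.
Qed.

Lemma typL_hi j : k.+2 <= j -> typL l' j = typL l j.-1.
Proof.
move=> hj; rewrite /typL /isoL !svL_ins_hi //; try lia.
rewrite !rlL_ins_hi //; try lia.
have -> : j.+1 == 1 = false by lia.
have -> : j.-1.+1 == 1 = false by lia.
have -> : j.-1.+1 = j by lia.
by [].
Qed.

Lemma size_ins : size l' = n.+1.
Proof. by rewrite /l' /ins size_cat /= size_take_k size_drop Hs; rewrite /k; lia. Qed.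

Lemma typL_end : p = 0 -> typL l' n = MZ.
Proof.
move=> p0; have kn : k = n by rewrite /k p0 subn0.
rewrite /typL /isoL.
have e1 : svL l' n.+1 = n.+1 by rewrite -{1}kn svL_ins_mid.
have e2 : svL l' n = svL l n by rewrite svL_ins_lo // kn.
rewrite e1 e2 ltnNge (leq_trans (svL_le n)) //=.
have r1 : rlL l' n.+1 by rewrite rlL_drop drop_oversize // size_ins.
have r2 : rlL l' n by rewrite rlL_ins_lo ?kn // rlL_drop drop_oversize ?Hs.
by rewrite r1 r2 orbT.
Qed.

Lemma typL_midY : k < n -> typL l' k.+1 = MY.
Proof.
move=> hk; rewrite /typL svL_ins_mid svL_ins_hi //=.
by rewrite ltnS svL_le.
Qed.

Lemma typL_midX : k < n -> typL l' k = MX.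
Proof.
move=> hk; rewrite /typL svL_ins_mid svL_ins_lo // ltnNge (leq_trans (svL_le k)) //.
by rewrite /isoL rlL_ins_mid // andbF.
Qed.
End Ins.

Lemma wordL_ins0 n l : size l = n -> all (fun v => 0 < v <= n) l ->
  [:: (ME, 0), (MZ, 1) & up (drop 1 (wordL l))] = wordL (ins n l 0).
Proof.
move=> Hs Hv; rewrite /wordL size_ins // Hs /= drop0.
congr [:: _, _ & _].
  by rewrite /wl size_ins // subSS subn0 typL_end.
rewrite /up -map_comp.
have -> : iota 2 n = map (addn 1) (iota 1 n) by rewrite -iotaDl.
rewrite -map_comp; apply/eq_in_map => i; rewrite mem_iota => /andP[i1 i2].
rewrite /= /wl size_ins // Hs add1n; case: i i1 i2 => // i _ i2 /=.
rewrite typL_lo //; rewrite subn0; lia.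
Qed.

Lemma wordL_insp n l p : size l = n -> all (fun v => 0 < v <= n) l ->
  0 < p <= n ->
  take p (wordL l) ++ [:: (MY, p), (MX, p.+1) & up (drop p.+1 (wordL l))]
  = wordL (ins n l p).
Proof.
move=> Hs Hv /andP[p1 p2]; rewrite /wordL size_ins // Hs.
have -> : iota 0 n.+2 = iota 0 p ++ [:: p, p.+1 & iota p.+2 (n - p)].
  have -> : n.+2 = p + (n.+2 - p) by lia.
  rewrite iotaD add0n; congr (_ ++ _).
  have -> : n.+2 - p = (n - p).+2 by lia.
  by [].
rewrite map_cat -map_take take_iota.
have -> : minn p n.+1 = p by lia.
apply: (f_equal2 cat).
  apply/eq_in_map => i; rewrite mem_iota => /andP[_ i2].
  rewrite /wl size_ins // Hs; case: i i2 => // i i2.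
  rewrite typL_hi //; try lia.
  by have -> : (n.+1 - i.+1).-1 = n - i.+1 by lia.
rewrite /= {1 2}/wl size_ins //.
have -> : n.+1 - p = (n - p).+1 by lia.
have -> : n.+1 - p.+1 = n - p by lia.
rewrite typL_midY ?typL_midX //; try lia.
case: p p1 p2 => // p' _ p2.
congr [:: _, _ & _].
rewrite /up -map_drop drop_iota -map_comp.
have -> : iota p'.+3 (n - p'.+1) = map (addn 1) (iota (1 + p'.+1) (n - p'.+1)) by rewrite -iotaDl.
rewrite -map_comp.
apply/eq_in_map => i; rewrite mem_iota => /andP[i1 i2].
rewrite /= /wl size_ins // Hs; case: i i1 i2 => // i i1 i2.
rewrite add1n typL_lo //; try lia.
Qed.

Fixpoint invS (l : seq nat) : nat :=
  if l is a :: t then count (fun v => v < a) t + invS t else 0.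
Fixpoint RLS (l : seq nat) : nat :=
  if l is a :: t then all (fun v => a < v) t + RLS t else 0.

Lemma invS_ins M l k : all (fun v => v < M) l -> k <= size l ->
  invS (take k l ++ M :: drop k l) = invS l + (size l - k).
Proof.
elim: l k => [|a t IH] k Hv hk.
  by case: k hk.
move: Hv; rewrite [all _ _]/= => /andP[haM Hv].
case: k hk => [|k] hk.
- rewrite take0 drop0 /=.
  have -> : count (fun v => v < M) t = size t.
    by apply/eqP; rewrite -all_count.
  rewrite haM subn0 /=; lia.
- rewrite /= IH //.
  rewrite count_cat /= ltnNge (ltnW haM) /= add0n -count_cat cat_take_drop; lia.
Qed.

Lemma RLS_ins M l k : all (fun v => v < M) l -> k <= size l ->
  RLS (take k l ++ M :: drop k l) = RLS l + (k == size l).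
Proof.
elim: l k => [|a t IH] k Hv hk.
  by case: k hk.
move: Hv; rewrite [all _ _]/= => /andP[haM Hv].
case: k hk => [|k] hk.
- rewrite take0 drop0 /=.
  have -> : (M < a) && all (fun v => M < v) t = false by rewrite ltnNge (ltnW haM).
  by rewrite addn0.
- rewrite /= IH //.
  rewrite all_cat /= haM -all_cat cat_take_drop eqSS; lia.
Qed.

Lemma svL_cons a t i : 0 < i -> svL (a :: t) i.+1 = svL t i.
Proof. by case: i. Qed.

Lemma map_svL_iota l : map (svL l) (iota 1 (size l)) = l.
Proof.
have -> : iota 1 (size l) = map (addn 1) (iota 0 (size l)) by rewrite -iotaDl.
rewrite -map_comp.
have -> : [seq (svL l \o addn 1) i | i <- iota 0 (size l)] = [seq nth 0 l i | i <- iota 0 (size l)].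
  by apply: eq_map.
by rewrite (map_nth_iota0 0) // take_size.
Qed.

Lemma RLS_count l : RLS l = count (rlL l) (iota 1 (size l)).
Proof.
elim: l => [|a t IH] //=.
rewrite IH; congr (_ + _).
  by rewrite rlL_drop /= drop0.
have -> : iota 2 (size t) = map (addn 1) (iota 1 (size t)) by rewrite -iotaDl.
rewrite count_map; apply: eq_in_count => i; rewrite mem_iota => /andP[i1 _].
by rewrite /= !rlL_drop add1n svL_cons.
Qed.

Definition invP l (ij : nat * nat) := (ij.1 < ij.2) && (svL l ij.2 < svL l ij.1).

Lemma count_allpairs (P : pred (nat * nat)) s t :
  count P [seq (i, j) | i <- s, j <- t] = sumn [seq count (fun j => P (i, j)) t | i <- s].
Proof. by elim: s => //= x s IH; rewrite count_cat IH count_map. Qed.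

Lemma invS_count l : invS l = count (invP l) [seq (i, j) | i <- iota 1 (size l), j <- iota 1 (size l)].
Proof.
rewrite count_allpairs.
elim: l => [|a t IH] //=.
have -> : iota 2 (size t) = map (addn 1) (iota 1 (size t)) by rewrite -iotaDl.
rewrite -map_comp /= IH; congr (_ + _).
  rewrite /invP /= count_map -[in LHS](map_svL_iota t) count_map.
  apply: eq_in_count => j; rewrite mem_iota => /andP[j1 _].
  rewrite /= add1n svL_cons // ltnS j1; reflexivity.
congr sumn; apply/eq_in_map => i; rewrite mem_iota => /andP[i1 _].
rewrite /= /invP /= add1n add0n count_map.
apply: eq_in_count => j; rewrite mem_iota => /andP[j1 _].
by rewrite /= add1n !svL_cons // ltnS.
Qed.

Lemma ins_perm n l p : perm_eq (ins n l p) (n.+1 :: l).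
Proof.
rewrite /ins -cat1s perm_catCA /= perm_cons.
by rewrite cat_take_drop.
Qed.

Fixpoint Q n : seq (seq nat) :=
  if n is m.+1 then [seq ins m l p | l <- Q m, p <- iota 0 m.+1] else [:: [::]].

Lemma Q_inv n l : l \in Q n -> size l = n /\ all (fun v => 0 < v <= n) l.
Proof.
elim: n l => [|n IH] l.
  by rewrite inE => /eqP ->.
move=> hl; have : l \in [seq ins n l p | l <- Q n, p <- iota 0 n.+1] by exact: hl.
case/allpairsP => -[l0 p] /= [hl0 hp ->].
have [Hs Hv] := IH _ hl0.
have Hp : p <= n by move: hp; rewrite inE mem_iota; lia.
split; first by rewrite size_ins.
rewrite (perm_all _ (ins_perm n l0 p)) /= leqnn /=.
by apply: sub_all Hv => v /andP[-> /leqW].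
Qed.

Lemma Q_complete n l : perm_eq l (iota 1 n) -> l \in Q n.
Proof.
elim: n l => [|n IH] l.
  by move/perm_size; case: l.
move=> hl.
have hM : n.+1 \in l by rewrite (perm_mem hl) mem_iota; lia.
set k := index n.+1 l.
have szl : size l = n.+1 by rewrite (perm_size hl) size_iota.
have hk : k < n.+1 by rewrite -szl index_mem.
have El : l = take k l ++ n.+1 :: drop k.+1 l.
  by rewrite -[in RHS](nth_index 0 hM) -/k -drop_nth ?cat_take_drop // szl.
set l0 := take k l ++ drop k.+1 l.
have hl0 : perm_eq l0 (iota 1 n).
  have h1 : perm_eq l (n.+1 :: l0) by rewrite {1}El /l0 -cat1s perm_catCA.
  have h2 : perm_eq (iota 1 n.+1) (n.+1 :: iota 1 n).
    have -> : iota 1 n.+1 = iota 1 n ++ [:: n.+1] by rewrite -[n.+1]addn1 iotaD /= add1n addn1.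
    by rewrite perm_catC.
  rewrite -(perm_cons n.+1).
  apply: (perm_trans _ (perm_trans hl h2)); by rewrite perm_sym.
change (l \in [seq ins n l p | l <- Q n, p <- iota 0 n.+1]).
apply/allpairsP; exists (l0, n - k) => /=; split.
- exact: IH.
- rewrite inE mem_iota; lia.
- have sk : size (take k l) = k by rewrite size_take szl; case: ltnP; lia.
  rewrite /ins (_ : n - (n - k) = k); last by lia.
  by rewrite /l0 take_size_cat // drop_size_cat // -El.
Qed.

Lemma size_Q n : size (Q n) = n`!.
Proof.
elim: n => // n IH.
change (size [seq ins n l p | l <- Q n, p <- iota 0 n.+1] = n.+1`!).
by rewrite size_allpairs IH size_iota factS mulnC.
Qed.

Definition lst n (s : 'S_n) : seq nat := [seq (s i).+1 | i <- enum 'I_n].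

Lemma size_lst n (s : 'S_n) : size (lst s) = n.
Proof. by rewrite size_map size_enum_ord. Qed.

Lemma lst_bound n (s : 'S_n) : all (fun v => 0 < v <= n) (lst s).
Proof. by apply/allP => v /mapP[i _ ->]; rewrite /= ltn_ord. Qed.

Lemma lst_perm n (s : 'S_n) : perm_eq (lst s) (iota 1 n).
Proof.
apply: uniq_perm; last first.
- move=> v; rewrite mem_iota; apply/mapP/idP => [[i _ ->]|hv].
  by have := ltn_ord (s i); lia.
  have hu : v.-1 < n by lia.
  exists ((s^-1)%g (Ordinal hu)); first by rewrite mem_enum.
  by rewrite permKV /=; lia.
- exact: iota_uniq.
- rewrite map_inj_uniq ?enum_uniq // => i j /= [] /val_inj; exact: perm_inj.
Qed.

Lemma lst_inj n : injective (@lst n).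
Proof.
move=> s t /eq_in_map e; apply/permP => i.
have := e i (mem_enum _ i); case; exact: val_inj.
Qed.

Lemma perm_Q n : perm_eq (map (@lst n) (enum 'S_n)) (Q n).
Proof.
have u1 : uniq (map (@lst n) (enum 'S_n)) by rewrite map_inj_uniq ?enum_uniq //; exact: lst_inj.
have sub : {subset map (@lst n) (enum 'S_n) <= Q n}.
  by move=> l /mapP[s _ ->]; apply: Q_complete; exact: lst_perm.
have sz : size (Q n) <= size (map (@lst n) (enum 'S_n)) by rewrite size_map -cardE card_Sn size_Q.
have [e1 e2] := uniq_min_size u1 sub sz.
apply: uniq_perm => //.
by rewrite (uniq_size_uniq u1 e2) e1.
Qed.

Lemma sum_S_Q (V : nmodType) n (G : seq nat -> V) :
  (\sum_(s : 'S_n) G (lst s) = \sum_(l <- Q n) G l)%R.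
Proof.
rewrite -(perm_big _ (perm_Q n)) big_map.
by rewrite big_enum.
Qed.

Definition isM (t m : master) : bool :=
  match t, m with MX, MX | MY, MY | MZ, MZ | ME, ME => true | _, _ => false end.

Lemma perm_rev_iota n : perm_eq (map (fun i => n - i) (iota 1 n)) (iota 0 n).
Proof.
apply: uniq_perm; last first.
- move=> x; rewrite mem_iota; apply/mapP/idP => [[i] |hx].
    by rewrite mem_iota; lia.
  by exists (n - x); rewrite ?mem_iota; lia.
- exact: iota_uniq.
- rewrite map_inj_in_uniq ?iota_uniq // => i j; rewrite !mem_iota; lia.
Qed.

Lemma count_rev_iota (P : pred nat) n :
  count P (map (fun i => n - i) (iota 1 n)) = count P (iota 0 n).
Proof. by move/seq.permP: (perm_rev_iota n) => ->. Qed.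

Section Counts.
Variables (n : nat) (l : seq nat).
Hypothesis Hs : size l = n.
Hypothesis Hv : all (fun v => 0 < v <= n) l.

Let desc i := svL l i.+1 < svL l i.

Lemma iso_asc j : j < n -> isoL l j.+1 -> ~~ desc j.
Proof.
move=> hj /andP[h1 _]; rewrite /desc -leqNgt.
case: j hj h1 => [|j] hj h1; first by [].
move: h1 => /= /allP /(_ j.+2).
rewrite mem_iota Hs => H; apply: ltnW; apply: H; lia.
Qed.

Lemma cntY : count (fun j => isM MY (typL l j)) (iota 0 n) = count desc (iota 0 n).
Proof.
apply: eq_count => j; rewrite /typL -/(desc j).
by case: (desc j) => //; case: isoL.
Qed.

Lemma cntZ : count (fun j => isM MZ (typL l j)) (iota 0 n) = count (isoL l) (iota 1 n).
Proof.
have -> : iota 1 n = map (addn 1) (iota 0 n) by rewrite -iotaDl.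
rewrite count_map; apply: eq_in_count => j; rewrite mem_iota => /andP[_ hj].
rewrite /typL -/(desc j) /= add1n.
case hd: (desc j); last by case: isoL.
case hi: (isoL l j.+1) => //.
by move: (iso_asc hj hi); rewrite hd.
Qed.

Lemma cntX : count (fun j => isM MX (typL l j)) (iota 0 n) =
   count (fun i => ~~ desc i && ~~ isoL l i.+1) (iota 0 n).
Proof.
apply: eq_count => j; rewrite /typL -/(desc j).
by case: (desc j) => //; case: isoL.
Qed.

Lemma cntE : count (fun j => isM ME (typL l j)) (iota 0 n) = 0.
Proof.
apply/eqP; rewrite -leqn0 leqNgt -has_count; apply/hasPn => j _.
by rewrite /typL; case: ifP => //; case: ifP.
Qed.

Lemma des_last : 0 < n -> count desc (iota 0 n.+1) = (count desc (iota 0 n)).+1.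
Proof.
move=> n0; rewrite -addn1 iotaD count_cat /= add0n.
have -> : desc n = true.
  rewrite /desc {1}/svL /= nth_default ?Hs //.
  apply: (svL_pos Hs Hv); lia.
by rewrite addn1.
Qed.
End Counts.

Section StatsS.
Variables (n : nat) (s : 'S_n).

Lemma is_rlmin_lst i : is_rlmin s i = rlL (lst s) i.
Proof. by rewrite /is_rlmin /rlL size_lst. Qed.

Lemma is_isolated_lst i : is_isolated s i = isoL (lst s) i.
Proof. by rewrite /is_isolated /isoL !is_rlmin_lst. Qed.

Lemma inv_lst : Defs.inv s = invS (lst s).
Proof. by rewrite invS_count size_lst. Qed.

Lemma RLmin_lst : RLmin s = RLS (lst s).
Proof. by rewrite RLS_count size_lst; apply: eq_count => i; rewrite is_rlmin_lst. Qed.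

Lemma isol_lst : isol s = count (isoL (lst s)) (iota 1 n).
Proof. by apply: eq_count => i; rewrite is_isolated_lst. Qed.

Lemma des_lst : des s = count (fun i => svL (lst s) i.+1 < svL (lst s) i) (iota 0 n.+1).
Proof. by []. Qed.

Lemma iasc_lst : iasc s = count (fun i => ~~ (svL (lst s) i.+1 < svL (lst s) i) && ~~ isoL (lst s) i.+1) (iota 0 n).
Proof. by apply: eq_count => i; rewrite /is_ascent is_isolated_lst. Qed.
End StatsS.
Import GRing.Theory.
Local Open Scope ring_scope.

Section Alg.
Variable K : comNzRingType.
Variable beta : K.
Local Notation V := {mpoly {poly K}[4]}.

Definition Fw (w : word) : V := \prod_(x <- w) 'X_(midx x.1).

Lemma prod_masters (s : seq master) :
  \prod_(m <- s) ('X_(midx m) : V) =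
  'X_(midx MX) ^+ count (isM MX) s * 'X_(midx MZ) ^+ count (isM MZ) s *
  'X_(midx MY) ^+ count (isM MY) s * 'X_(midx ME) ^+ count (isM ME) s.
Proof.
elim: s => [|m s IH]; first by rewrite big_nil !expr0 !mulr1.
rewrite big_cons IH; case: m => /=; rewrite ?add1n ?add0n !exprS; ring.
Qed.

Lemma count_typ n l t : count (isM t) [seq typL l (n - i)%N | i <- iota 1 n] =
  count (fun j => isM t (typL l j)) (iota 0 n).
Proof.
rewrite -count_rev_iota.
have -> : [seq typL l (n - i)%N | i <- iota 1 n] = map (typL l) (map (fun i => n - i)%N (iota 1 n)).
  by rewrite -map_comp.
by rewrite count_map.
Qed.

Lemma Fw_wordL n l : size l = n -> all (fun v => (0 < v <= n)%N) l ->
  Fw (wordL l) = 'X_(midx ME) *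
   ('X_(midx MX) ^+ count (fun j => isM MX (typL l j)) (iota 0 n) *
    'X_(midx MZ) ^+ count (fun j => isM MZ (typL l j)) (iota 0 n) *
    'X_(midx MY) ^+ count (fun j => isM MY (typL l j)) (iota 0 n)).
Proof.
move=> Hs Hv.
rewrite /Fw /wordL Hs big_map [iota 0 n.+1]/= big_cons.
have -> : \prod_(j <- iota 1 n) ('X_(midx (wl l j).1) : V) =
          \prod_(m <- map (fun i => typL l (n - i)) (iota 1 n)) 'X_(midx m).
  rewrite big_map big_seq [RHS]big_seq; apply: eq_bigr => i.
  by rewrite mem_iota /wl Hs; case: i.
rewrite prod_masters !count_typ cntE expr0 mulr1; ring.
Qed.

Definition cf (p : nat) : {poly K} := if p is 0 then beta%:P * 'X^0 else 'X^p.
Definition wtL (l : seq nat) : {poly K} := (beta ^+ RLS l)%:P * 'X^(invS l).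

Lemma sum_Dcyc (E : elem K) (F : word -> V) :
  \sum_(a <- Dcyc beta E) a.1 *: F a.2 =
  \sum_(a <- E) a.1 *: \sum_(c <- Dword beta a.2) c.1 *: F c.2.
Proof.
rewrite /Dcyc big_flatten big_map; apply: eq_bigr => a _.
rewrite big_map scaler_sumr; apply: eq_bigr => c _.
by rewrite scalerA.
Qed.

Lemma sum_Dword n l (F : word -> V) : size l = n -> all (fun v => (0 < v <= n)%N) l ->
  \sum_(c <- Dword beta (wordL l)) c.1 *: F c.2 =
  \sum_(p <- iota 0 n.+1) cf p *: F (wordL (ins n l p)).
Proof.
move=> Hs Hv.
have szw : size (wordL l) = n.+1 by rewrite size_map size_iota Hs.
rewrite /Dword big_flatten big_map szw big_seq [RHS]big_seq; apply: eq_bigr => j.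
rewrite mem_iota add0n => /andP[_ hj].
rewrite big_map.
have -> : nth (MX, 0%N) (wordL l) j = wl l j.
  by rewrite /wordL (nth_map 0%N) ?size_iota ?nth_iota // Hs.
case: j hj => [|p] hp.
  rewrite /= big_seq1 /=; congr (_ *: F _).
  rewrite -wordL_ins0 //.
rewrite /wl Hs.
have -> : rule_cyc beta (typL l (n - p.+1), p.+1) = [:: ('X^(p.+1), [:: (MY, p.+1); (MX, p.+2)])].
  by rewrite /rule_cyc /= /typL; case: ifP => _ //; case: ifP.
rewrite big_seq1 /=; congr (_ *: F _).
by rewrite -(wordL_insp Hs Hv) //; lia.
Qed.

Lemma wt_ins n l p : size l = n -> all (fun v => (0 < v <= n)%N) l -> (p <= n)%N ->
  wtL (ins n l p) = wtL l * cf p.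
Proof.
move=> Hs Hv Hp.
have HM : all (fun v => v < n.+1)%N l by apply: sub_all Hv => v /andP[_].
have Hk : (n - p <= size l)%N by rewrite Hs leq_subr.
rewrite /wtL /ins (invS_ins HM Hk) (RLS_ins HM Hk) Hs.
have -> : (n - (n - p) = p)%N by lia.
case: p Hp Hk => [|p] Hp Hk /=.
  rewrite subn0 eqxx addn0 addn1 exprS polyCM; ring.
have -> : (n - p.+1 == n)%N = false by lia.
by rewrite addn0 exprD mulrA.
Qed.

Lemma main n (F : word -> V) :
  \sum_(a <- Dcyc_iter beta n (e0 K)) a.1 *: F a.2 = \sum_(l <- Q n) wtL l *: F (wordL l).
Proof.
elim: n F => [|n IH] F.
  by rewrite /= !big_seq1 /wtL /= expr0 mulr1.
change (Dcyc_iter beta n.+1 (e0 K)) with (Dcyc beta (Dcyc_iter beta n (e0 K))).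
rewrite sum_Dcyc (IH (fun w => \sum_(c <- Dword beta w) c.1 *: F c.2)).
change (Q n.+1) with (flatten [seq [seq ins n l p | p <- iota 0 n.+1] | l <- Q n]).
rewrite big_flatten big_map big_seq [RHS]big_seq; apply: eq_bigr => l hl.
have [Hs Hv] := Q_inv hl.
rewrite (sum_Dword _ Hs Hv) big_map scaler_sumr big_seq [RHS]big_seq; apply: eq_bigr => p.
rewrite mem_iota => /andP[_ hp].
rewrite scalerA wt_ins //; lia.
Qed.
End Alg.

Unset Implicit Arguments.
Import GRing.Theory.
Local Open Scope ring_scope.

Theorem theorem5p8 (K : comNzRingType) (char0 : [pchar K] =i pred0)
    (beta : K) (n : nat) :
  (0 < n)%N ->
  phi (Dcyc_iter beta n (e0 K)) = 'X_(midx ME) * Finv beta n.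
Proof.
move=> n0.
have -> : phi (Dcyc_iter beta n (e0 K)) =
  \sum_(a <- Dcyc_iter beta n (e0 K)) a.1 *: Fw K a.2 by [].
rewrite main -(@sum_S_Q _ n (fun l => wtL beta l *: Fw K (wordL l))).
rewrite /Finv mulr_sumr; apply: eq_bigr => s _.
rewrite -scalerAr; congr (_ *: _).
  by rewrite /wtL RLmin_lst inv_lst.
rewrite (Fw_wordL K (size_lst s) (lst_bound s)); congr (_ * (_ * _ * _)).
- by rewrite cntX iasc_lst.
- by rewrite (cntZ (size_lst s) (lst_bound s)) isol_lst.
- by rewrite cntY des_lst (des_last (size_lst s) (lst_bound s) n0).
Qed.
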